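(* Let $r \ge 1$ and let $O, E, B \subseteq \mathbb{R}^r$ be axis-aligned bounding boxes. Then \[ \Bigl[\forall o' \in \mathrm{Corners}(O) : \mathrm{MaxDist}(o', E) < \mathrm{MinDist}(o', B)\Bigr] \iff \Bigl[\forall o \in O : \forall e \in E : \forall b \in B : \mathrm{dist}(o, e) < \mathrm{dist}(o, b)\Bigr]. \]
   Context: An axis-aligned bounding box (AABB) in $\mathbb{R}^r$ is a set $M = \prod_{d=1}^r [\check{M}_d, \hat{M}_d]$ with real numbers $\check{M}_d \le \hat{M}_d$ for each $d$; membership $p \in M$ means $\check{M}_d \le p_d \le \hat{M}_d$ for all $d$. $\mathrm{Corners}(M)$ is the set of the $2^r$ vertices of $M$, i.e. the points $c$ with $c_d \in \{\check{M}_d, \hat{M}_d\}$ for every $d$. $\mathrm{dist}$ is the Euclidean distance on $\mathbb{R}^r$. For a point $p$ and an AABB $M$, $\mathrm{MaxDist}(p, M) = \max_{q \in M} \mathrm{dist}(p, q)$ and $\mathrm{MinDist}(p, M) = \min_{q \in M} \mathrm{dist}(p, q)$. *)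

(* Defs.v *)
From HB Require Import structures.
From mathcomp Require Import all_boot all_order all_algebra.
From mathcomp Require Import boolp classical_sets reals.
Set Implicit Arguments. Unset Strict Implicit. Unset Printing Implicit Defensive.
Import Order.TTheory GRing.Theory Num.Theory.
Local Open Scope ring_scope.
Local Open Scope classical_set_scope.

Definition point (R : realType) (r : nat) := 'I_r -> R.

(* An axis-aligned bounding box given by lower corner lo and upper corner hi
   (with lo d <= hi d for every d, required as a hypothesis where used). *)
Record AABB (R : realType) (r : nat) := mkAABB { lo : 'I_r -> R ; hi : 'I_r -> R }.

Definition wf_box (R : realType) (r : nat) (M : AABB R r) : Prop :=
  forall d : 'I_r, lo M d <= hi M d.

Definition in_box (R : realType) (r : nat) (M : AABB R r) (p : 'I_r -> R) : Prop :=
  forall d : 'I_r, lo M d <= p d <= hi M d.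

Definition is_corner (R : realType) (r : nat) (M : AABB R r) (c : 'I_r -> R) : Prop :=
  forall d : 'I_r, c d = lo M d \/ c d = hi M d.

Definition dist (R : realType) (r : nat) (p q : 'I_r -> R) : R :=
  Num.sqrt (\sum_(d < r) (p d - q d) ^+ 2).

(* MaxDist(p, M) = max_{q in M} dist(p,q), MinDist(p, M) = min_{q in M} dist(p,q);
   for a (nonempty, compact) box these max/min are the sup/inf of the distance set. *)
Definition MaxDist (R : realType) (r : nat) (p : 'I_r -> R) (M : AABB R r) : R :=
  sup [set dist p q | q in in_box M].

Definition MinDist (R : realType) (r : nat) (p : 'I_r -> R) (M : AABB R r) : R :=
  inf [set dist p q | q in in_box M].

(* Main.v *)
Require Import Defs.
From HB Require Import structures.
From mathcomp Require Import all_boot all_order all_algebra.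
From mathcomp Require Import boolp classical_sets reals.
From mathcomp Require Import lra.
Import Order.TTheory GRing.Theory Num.Theory.
Local Open Scope ring_scope.

Section Aux.
Context {R : realType} {r : nat}.

Definition D2 (p q : 'I_r -> R) := \sum_(d < r) (p d - q d) ^+ 2.

Lemma D2_ge0 p q : 0 <= D2 p q.
Proof. by apply: sumr_ge0 => d _; rewrite sqr_ge0. Qed.

Lemma dist_le p q p' q' : D2 p q <= D2 p' q' -> dist p q <= dist p' q'.
Proof. by move=> h; rewrite /dist ler_sqrt // D2_ge0. Qed.

Lemma dist_lt p q p' q' : D2 p q < D2 p' q' -> dist p q < dist p' q'.
Proof. by move=> h; rewrite /dist ltr_sqrt // (le_lt_trans (D2_ge0 p q)). Qed.

Lemma dist_lt_inv p q p' q' : dist p q < dist p' q' -> D2 p q < D2 p' q'.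
Proof.
move=> h; rewrite /dist in h.
have [H|H] := leP (D2 p' q') (D2 p q) => //.
have := @dist_le p' q' p q H; rewrite /dist => h'.
by move: (lt_le_trans h h'); rewrite ltxx.
Qed.

Definition far (p : 'I_r -> R) (M : AABB R r) : 'I_r -> R :=
  fun d => if p d - lo M d <= hi M d - p d then hi M d else lo M d.

Definition near (p : 'I_r -> R) (M : AABB R r) : 'I_r -> R :=
  fun d => if p d < lo M d then lo M d else if hi M d < p d then hi M d else p d.

Lemma far_in p M : wf_box M -> in_box M (far p M).
Proof.
move=> w d; rewrite /far; have := w d.
by case: ifP => _ h; apply/andP; split.
Qed.

Lemma near_in p M : wf_box M -> in_box M (near p M).
Proof.
move=> w d; rewrite /near; have := w d.
case: ifP => h1 h; first by apply/andP; split.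
case: ifP => h2; first by apply/andP; split.
move/negbT: h1; move/negbT: h2; rewrite -!leNgt => h1 h2.
by apply/andP; split.
Qed.

Lemma far_max p M q : in_box M q -> D2 p q <= D2 p (far p M).
Proof.
move=> hq; apply: ler_sum => d _; rewrite /far.
move/andP: (hq d) => [h1 h2].
case: ifP => h.
  by nra.
by move/negbT: h; rewrite -ltNge => h; nra.
Qed.

Lemma near_min p M q : in_box M q -> D2 p (near p M) <= D2 p q.
Proof.
move=> hq; apply: ler_sum => d _; rewrite /near.
move/andP: (hq d) => [h1 h2].
case: ifP => h; first by nra.
move/negbT: h; rewrite -leNgt => h.
case: ifP => h'; first by nra.
by rewrite subrr expr0n /= sqr_ge0.
Qed.

Lemma MaxDistE p M : wf_box M -> MaxDist p M = dist p (far p M).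
Proof.
move=> w; rewrite /MaxDist; apply/eqP; rewrite eq_le; apply/andP; split.
  apply: ge_sup; first by exists (dist p (far p M)); exists (far p M) => //; exact: far_in.
  by move=> x [q hq <-]; apply: dist_le; apply: far_max.
apply: ub_le_sup; last by exists (far p M) => //; exact: far_in.
exists (dist p (far p M)) => x [q hq <-]; apply: dist_le; exact: far_max.
Qed.

Lemma MinDistE p M : wf_box M -> MinDist p M = dist p (near p M).
Proof.
move=> w; rewrite /MinDist; apply/eqP; rewrite eq_le; apply/andP; split.
  apply: ge_inf; last by exists (near p M) => //; exact: near_in.
  exists (dist p (near p M)) => x [q hq <-]; apply: dist_le; exact: near_min.
apply: lb_le_inf; first by exists (dist p (near p M)); exists (near p M) => //; exact: near_in.
by move=> x [q hq <-]; apply: dist_le; apply: near_min.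
Qed.

End Aux.

Theorem theorem4p1 (R : realType) (r : nat) (O E B : AABB R r) :
  (0 < r)%N -> wf_box O -> wf_box E -> wf_box B ->
  ((forall o' : 'I_r -> R, is_corner O o' -> MaxDist o' E < MinDist o' B) <->
   (forall o e b : 'I_r -> R, in_box O o -> in_box E e -> in_box B b ->
      dist o e < dist o b)).
Proof.
move=> _ wO wE wB; split.
  move=> H o e b ho he hb.
  pose o' := fun d => if e d <= b d then hi O d else lo O d.
  have co : is_corner O o' by move=> d; rewrite /o'; case: ifP => _; [right|left].
  have := H o' co; rewrite MaxDistE // MinDistE // => h.
  have h1 : D2 o' e < D2 o' b.
    apply: (le_lt_trans (far_max o' E e he)).
    apply: (lt_le_trans _ (near_min o' B b hb)).
    exact: dist_lt_inv.
  apply: dist_lt.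
  have h2 : D2 o e - D2 o b <= D2 o' e - D2 o' b.
    rewrite /D2 -!sumrB; apply: ler_sum => d _; rewrite /o'.
    move/andP: (ho d) => [a1 a2].
    case: ifP => h3; first by nra.
    by move/negbT: h3; rewrite -ltNge => h3; nra.
  lra.
move=> H o' co.
have ho' : in_box O o'.
  by move=> d; have := wO d; case: (co d) => ->; rewrite lexx => ->.
rewrite MaxDistE // MinDistE //.
apply: H => //; [exact: far_in | exact: near_in].
Qed.
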